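(* Let $\nu<0$ and define $\mathcal{R}_\nu:\mathbb{R}\to\mathbb{R}$ by $$\mathcal{R}_\nu(x):=\frac{(H_{\nu-1}(x))^2}{H_{\nu}(x)\,H_{\nu-2}(x)},\qquad x\in\mathbb{R},$$ where $H_\alpha$ denotes the Hermite function of index $\alpha$. Then $$1<\mathcal{R}_\nu(x)<\frac{\nu-1}{\nu}\qquad\text{for all }x\in\mathbb{R}.$$ In particular, the Turán-type inequality $$H_{\nu-1}(x)^2-H_{\nu}(x)H_{\nu-2}(x)>0$$ holds for all $x\in\mathbb{R}$.
   Context: For $\alpha<0$, the Hermite function $H_\alpha:\mathbb{R}\to\mathbb{R}$ is the solution of the ODE $u''(x)-2xu'(x)+2\alpha u(x)=0$ given by the integral representation $$H_\alpha(x)=\frac{1}{\Gamma(-\alpha)}\int_0^\infty t^{-\alpha-1}e^{-t^2-2xt}\,dt,\qquad x\in\mathbb{R},$$ where $\Gamma$ is Euler's Gamma function. In particular $H_\alpha(x)>0$ for all $x$ when $\alpha<0$. *)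

(* Defs.v *)
From mathcomp Require Import all_boot all_order all_algebra.
From mathcomp Require Import all_classical all_reals all_analysis.
Import Order.TTheory GRing.Theory Num.Theory.
Local Open Scope classical_set_scope.
Local Open Scope ring_scope.

Definition Gamma {R : realType} (s : R) : R :=
  Rintegral (@lebesgue_measure R) `[0%R, +oo[%classic
    (fun t => t `^ (s - 1) * expR (- t)).

(* Hermite function, alpha < 0:
   H_alpha(x) = 1/Gamma(-alpha) * \int_0^oo t^(-alpha-1) e^(-t^2 - 2 x t) dt *)
Definition Hermite {R : realType} (alpha x : R) : R :=
  (Gamma (- alpha))^-1 *
  Rintegral (@lebesgue_measure R) `[0%R, +oo[%classic
    (fun t => t `^ (- alpha - 1) * expR (- t ^+ 2 - 2 * x * t)).

Definition Rratio {R : realType} (nu x : R) : R :=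
  (Hermite (nu - 1) x) ^+ 2 / (Hermite nu x * Hermite (nu - 2) x).

(* Main.v *)
Require Import Defs.
From mathcomp Require Import all_boot all_order all_algebra.
From mathcomp Require Import all_classical all_reals all_analysis.
From mathcomp Require Import ring lra zify.
From mathcomp Require Import measurable_realfun.
Import Order.TTheory GRing.Theory Num.Theory.
Import numFieldNormedType.Exports.
Local Open Scope classical_set_scope.
Local Open Scope ring_scope.

Section S.
Context {R : realType}.
Notation mu := (@lebesgue_measure R).

Local Notation Dp := (`]0%R, +oo[%classic : set R).

Definition cc (n : nat) : R := (n.+1%:R)^-1.
Definition TT (n : nat) : R := n.+2%:R.

Lemma cc_gt0 n : 0 < cc n. Proof. by rewrite /cc invr_gt0 ltr0n. Qed.
Lemma cc_lt_TT n : cc n < TT n.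
Proof.
rewrite /cc /TT (@le_lt_trans _ _ 1) ?ltr1n//.
by rewrite invf_le1 ?ler1n ?ltr0n.
Qed.

Lemma window_int (f F : R -> R) n :
  {in `]0, +oo[, continuous f} ->
  (forall x, 0 < x -> derivable F x 1) ->
  {in `]0, +oo[, F^`()%classic =1 f} ->
  (\int[mu]_(x in `]0%R, +oo[) ((EFin \o f) \_ `[cc n, TT n]) x =
    (F (TT n) - F (cc n))%:E)%E.
Proof.
move=> cf dF dFf.
have c0 := cc_gt0 n.
have sub : `[cc n, TT n] `<=` `]0, +oo[.
  by move=> x /=; rewrite !in_itv/= andbT => /andP[+ _]; exact: lt_le_trans.
rewrite -integral_mkcondr setIidr// EFinB.
apply: continuous_FTC2.
- exact: cc_lt_TT.
- apply: continuous_in_subspaceT => x /[1!inE] /sub /= x0.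
  by apply: cf; rewrite inE.
- split.
  + move=> x; rewrite in_itv/= => /andP[+ _] => cx.
    by apply: dF; exact: lt_trans cx.
  + apply: cvg_at_right_filter.
    apply/differentiable_continuous; rewrite -derivable1_diffP.
    exact: dF.
  + apply: cvg_at_left_filter.
    apply/differentiable_continuous; rewrite -derivable1_diffP.
    by apply: dF; rewrite /TT ltr0n.
- move=> x; rewrite in_itv/= => /andP[cx _]; apply: dFf.
  by rewrite in_itv/= andbT; exact: lt_trans cx.
Qed.

Lemma window_ev x : 0 < x -> \forall n \near \oo, cc n <= x <= TT n.
Proof.
move=> x0; set N := Num.bound (x + x^-1).
have hN : x + x^-1 < N%:R by apply: archi_boundP; rewrite addr_ge0// ?ltW ?invr_gt0.
have xi0 : 0 < x^-1 by rewrite invr_gt0.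
near=> n; have Nn : (N <= n)%N by near: n; exists N.
have Nn' : (N%:R <= n%:R :> R) by rewrite ler_nat.
have n1 : (n.+1%:R : R) = n%:R + 1 by rewrite -natr1.
have n2 : (n.+2%:R : R) = n%:R + 2 by rewrite -addn2 natrD.
apply/andP; split; last by rewrite /TT n2; lra.
rewrite /cc -[x]invrK lef_pV2 ?posrE ?ltr0n//; rewrite n1; lra.
Unshelve. all: by end_near. Qed.

Lemma window_sub n m : (n <= m)%N -> `[cc n, TT n] `<=` `[cc m, TT m].
Proof.
move=> nm x /=; rewrite !in_itv/= => /andP[h1 h2]; apply/andP; split.
  apply: le_trans h1; rewrite /cc lef_pV2 ?posrE ?ltr0n// ler_nat; lia.
apply: le_trans h2 _; rewrite /TT ler_nat; lia.
Qed.

Lemma toolP (f F : R -> R) (m M : R) :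
  (forall x, 0 < x -> 0 <= f x) ->
  {in `]0, +oo[, continuous f} ->
  (forall x, 0 < x -> derivable F x 1) ->
  {in `]0, +oo[, F^`()%classic =1 f} ->
  (forall x, 0 < x -> m <= F x <= M) ->
  mu.-integrable `]0%R, +oo[ (EFin \o f).
Proof.
move=> f0 cf dF dFf mFM.
have mf : measurable_fun (`]0%R, +oo[ : set R) f.
  apply: measurable_realfun.open_continuous_measurable_fun => // x /[1!inE] /= x0; exact: cf.
have mEf : measurable_fun (`]0%R, +oo[ : set R) (EFin \o f) by exact/measurable_EFinP.
apply/integrableP; split; first exact: mEf.
pose g n := (EFin \o f) \_ `[cc n, TT n].
have mg n : measurable_fun (`]0%R, +oo[ : set R) (g n).
  apply/measurable_restrict => //.
  by apply: measurable_funS mEf => //; exact: subIsetl.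
have g0 n x : Dp x -> (0 <= g n x)%E.
  move=> /=; rewrite in_itv/= andbT => x0.
  by rewrite /g patchE; case: ifP => // _; rewrite lee_fin f0.
have ndg x : Dp x -> {homo g^~ x : n m / (n <= m)%N >-> (n <= m)%E}.
  move=> /=; rewrite in_itv/= andbT => x0 a b ab.
  rewrite /g !patchE; case: ifPn => xa; last by case: ifP => // _; rewrite lee_fin f0.
  by rewrite mem_set//; apply: (@window_sub a b ab); rewrite inE in xa.
have limg x : Dp x -> limn (g^~ x) = (f x)%:E.
  move=> /=; rewrite in_itv/= andbT => x0.
  apply/cvg_lim => //; apply: cvg_near_cst; near=> n.
  have hn : cc n <= x <= TT n by near: n; exact: window_ev.
  by rewrite /g patchE mem_set//= in_itv/= hn.
have -> : (\int[mu]_(x in `]0%R, +oo[) `|(EFin \o f) x| =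
          \int[mu]_(x in `]0%R, +oo[) (fun x => limn (g^~ x)) x)%E.
  apply: eq_integral => x /[1!inE] xD; rewrite limg//= ger0_norm// f0//.
  by move: xD => /=; rewrite in_itv/= andbT.
have H := cvg_monotone_convergence (mu:=mu) (measurable_itv _) mg g0 ndg.
rewrite -(cvg_lim _ H)//.
apply: (@le_lt_trans _ _ (M - m)%:E); last exact: ltey.
apply: lime_le; first exact: (cvgP _ H).
near=> n; rewrite /g (window_int f F n cf dF dFf).
rewrite lee_fin.
have /andP[_ h1] := mFM _ (lt_trans (cc_gt0 n) (cc_lt_TT n)).
have /andP[h2 _] := mFM _ (cc_gt0 n).
lra.
Unshelve. all: by end_near. Qed.

Lemma cc_cvg : cc n @[n --> \oo] --> (0 : R).
Proof. exact: (@cvg_harmonic R). Qed.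

Lemma TT_cvg : TT n @[n --> \oo] --> +oo.
Proof.
apply/cvgryPge => A; near=> n.
have hA := archi_boundP (normr_ge0 A).
have Nn : (Num.bound `|A| <= n)%N by near: n; exists (Num.bound `|A|).
rewrite /TT (le_trans (ler_norm A))// (le_trans (ltW hA))// ler_nat; apply: (leq_trans Nn); lia.
Unshelve. all: by end_near. Qed.

Lemma toolS (f F : R -> R) (l0 l : R) :
  mu.-integrable Dp (EFin \o f) ->
  {in `]0, +oo[, continuous f} ->
  (forall x, 0 < x -> derivable F x 1) ->
  {in `]0, +oo[, F^`()%classic =1 f} ->
  F x @[x --> 0^'+] --> l0 ->
  F x @[x --> +oo] --> l ->
  (\int[mu]_(x in Dp) (f x)%:E = (l - l0)%:E)%E.
Proof.
move=> intf cf dF dFf Fl0 Fl.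
have mEf : measurable_fun Dp (EFin \o f) by case/integrableP: intf.
pose g n := (EFin \o f) \_ `[cc n, TT n].
have mg n : measurable_fun Dp (g n).
  apply/measurable_restrict => //.
  by apply: measurable_funS mEf => //; exact: subIsetl.
have gf : {ae mu, forall x, Dp x -> g ^~ x @ \oo --> (EFin \o f) x}.
  apply: aeW => x /=; rewrite in_itv/= andbT => x0.
  apply: cvg_near_cst; near=> n.
  have hn : cc n <= x <= TT n by near: n; exact: window_ev.
  by rewrite /g patchE mem_set//= in_itv/= hn.
have gb : {ae mu, forall x n, Dp x -> (`|g n x| <= `|(EFin \o f) x|)%E}.
  apply: aeW => x n _; rewrite /g patchE; case: ifP => // _.
  by rewrite abse0 abse_ge0.
have [_ _ H] := dominated_convergence (mu:=mu) (measurable_itv _) mg mEf gf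
  (integrable_abse intf) gb.
have H2 : (EFin \o (fun n => F (TT n) - F (cc n))) @ \oo --> (l - l0)%:E.
  apply: cvg_EFin; first exact: nearW.
  apply: cvgB.
    exact: (cvg_pinftyP F l).1 Fl _ TT_cvg.
  apply: ((cvg_at_rightP F 0 l0).1 Fl0 cc); split; first exact: cc_gt0.
  exact: cc_cvg.
have E : (fun n => \int[mu]_(x in Dp) g n x)%E =
         (EFin \o (fun n => F (TT n) - F (cc n))).
  by apply/funext => n; rewrite /g (window_int f F n cf dF dFf).
rewrite E in H.
exact: (cvg_unique _ H H2).
Unshelve. all: by end_near. Qed.

Lemma Rint_pos (f : R -> R) t0 :
  mu.-integrable Dp (EFin \o f) -> (forall x, 0 < x -> 0 <= f x) ->
  0 < t0 -> {for t0, continuous f} -> 0 < f t0 ->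
  0 < \int[mu]_(x in Dp) f x.
Proof.
move=> intf f0 t00 cf ft0.
have mEf : measurable_fun Dp (EFin \o f) by case/integrableP: intf.
have /cvgrPdist_lt /(_ (f t0 / 2)) : f x @[x --> t0] --> f t0 := cf.
move=> /(_ (divr_gt0 ft0 (ltr0Sn _ 1))) /nbhs_ballP[d /= d0 Hd].
pose del := Num.min (d / 2) (t0 / 2).
have del0 : 0 < del by rewrite lt_min !divr_gt0.
have deld : del < d by rewrite gt_min ltr_pdivrMr// ltr_pMr// ltr1n.
have delt : del <= t0 / 2 by rewrite ge_min lexx orbT.
pose W := `[t0 - del, t0 + del].
have WD : [set` W] `<=` Dp.
  move=> x /=; rewrite !in_itv/= andbT => /andP[h _].
  apply: lt_le_trans h; lra.
have fW x : x \in W -> f t0 / 2 <= f x.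
  rewrite in_itv/= => /andP[h1 h2].
  have : `|f t0 - f x| < f t0 / 2.
    apply: Hd; rewrite /ball/= ltr_norml; apply/andP; split; lra.
  rewrite ltr_norml => /andP[_]; lra.
rewrite /Rintegral.
have H1 : ((f t0 / 2)%:E * mu [set` W] <= \int[mu]_(x in Dp) (f x)%:E)%E.
  apply: (@le_trans _ _ (\int[mu]_(x in [set` W]) (f x)%:E)%E); last first.
    apply: ge0_subset_integral => //= x; rewrite in_itv/= andbT => x0.
    by rewrite lee_fin f0.
  rewrite -integral_cst//; apply: ge0_le_integral => //.
  all: try (by move=> x _; rewrite lee_fin; apply: ltW; exact: divr_gt0).
  all: try (by apply: measurable_funS mEf).
  all: try (by move=> x /= xW; rewrite lee_fin fW).
have Hfin : (\int[mu]_(x in Dp) (f x)%:E)%E \is a fin_num by apply: integrable_fin_num.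
move: H1; rewrite lebesgue_measure_itv/= lte_fin ifT; last lra.
rewrite -EFinM -(fineK Hfin) lee_fin => H1.
apply: lt_le_trans H1; apply: mulr_gt0; first exact: divr_gt0.
lra.
Qed.

Lemma is_derive_comp1 {f g : R -> R} {x df dg : R} :
  is_derive x 1 f df -> is_derive (f x) 1 g dg -> is_derive x 1 (g \o f) (dg * df).
Proof.
move=> hf hg.
have dfx : derivable f x 1 by case: hf.
have dgx : derivable g (f x) 1 by case: hg.
apply: DeriveDef.
  apply/derivable1_diffP; apply: differentiable_comp.
    exact/derivable1_diffP.
  exact/derivable1_diffP.
by rewrite -derive1E derive1_comp// !derive1E !derive_val.
Qed.

Lemma is_derive_cont {f : R -> R} {x df : R} : is_derive x 1 f df -> {for x, continuous f}.
Proof.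
move=> [hd _]; apply/differentiable_continuous; exact/derivable1_diffP.
Qed.

Lemma powR_exp_bound a : exists2 K : R, 0 <= K &
  forall t, 1 <= t -> t `^ a <= K * expR (t / 2).
Proof.
set n := Num.bound `|a|.
have hn : `|a| < n%:R := archi_boundP (normr_ge0 a).
exists (2 ^+ n.+1 * n.+1`!%:R); first by rewrite mulr_ge0// exprn_ge0.
move=> t t1.
have t0 : 0 <= t by apply: le_trans t1.
have h1 : t `^ a <= t `^ (n.+1%:R).
  apply: ler_powR => //; apply: le_trans (ler_norm a) _.
  by apply: le_trans (ltW hn) _; rewrite ler_nat.
apply: le_trans h1 _; rewrite powR_mulrn//.
have h2 := expR_ge1Dxn n (divr_ge0 t0 (ler0n R 2)).
have fpos : (0 : R) < n.+1`!%:R by rewrite ltr0n fact_gt0.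
have ht : t ^+ n.+1 = 2 ^+ n.+1 * (t / 2) ^+ n.+1.
  by rewrite -exprMn mulrCA divff ?mulr1// pnatr_eq0.
rewrite ht -mulrA ler_pM2l ?exprn_gt0//.
rewrite -ler_pdivrMl//.
apply: le_trans h2; rewrite mulrC lerDr//.
Qed.

Lemma is_derive_ext {f g : R -> R} {x df dg : R} :
  (forall y, f y = g y) -> df = dg -> is_derive x 1 f df -> is_derive x 1 g dg.
Proof. by move=> /funext -> ->. Qed.

Lemma dMul {f g : R -> R} {t df dg : R} : is_derive t 1 f df -> is_derive t 1 g dg ->
  is_derive t 1 (fun y => f y * g y) (df * g t + f t * dg).
Proof.
move=> hf hg; have := is_deriveM hf hg; apply: is_derive_ext => //.
by change (f t * dg + g t * df = df * g t + f t * dg); ring.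
Qed.

Lemma dAdd {f g : R -> R} {t df dg : R} : is_derive t 1 f df -> is_derive t 1 g dg ->
  is_derive t 1 (fun y => f y + g y) (df + dg).
Proof. by move=> hf hg; have := is_deriveD hf hg; apply: is_derive_ext. Qed.

Lemma dScale {f : R -> R} (k : R) {t df : R} : is_derive t 1 f df ->
  is_derive t 1 (fun y => k * f y) (k * df).
Proof. by move=> hf; have := is_deriveZ k hf; apply: is_derive_ext. Qed.

Lemma dExp {f : R -> R} {t df : R} : is_derive t 1 f df ->
  is_derive t 1 (fun y => expR (f y)) (expR (f t) * df).
Proof. by move=> hf; have := is_derive_comp1 hf (is_derive_expR (f t)). Qed.

Lemma dId (t : R) : is_derive t 1 (fun y => y) 1.
Proof. exact: is_derive_id. Qed.

Lemma dCst (k t : R) : is_derive t 1 (fun _ => k) 0.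
Proof. exact: is_derive_cst. Qed.

Lemma dPow (a : R) {t : R} : 0 < t -> is_derive t 1 (fun y => y `^ a) (a * t `^ (a - 1)).
Proof. exact: is_derive1_powR. Qed.

End S.

Section S2.
Context {R : realType}.
Notation mu := (@lebesgue_measure R).
Local Notation Dp := (`]0%R, +oo[%classic : set R).

Lemma cMul (f g : R -> R) (t : R) : {for t, continuous f} -> {for t, continuous g} ->
  {for t, continuous (fun y => f y * g y)}.
Proof. by move=> hf hg; apply: cvgM. Qed.

Lemma cAdd (f g : R -> R) (t : R) : {for t, continuous f} -> {for t, continuous g} ->
  {for t, continuous (fun y => f y + g y)}.
Proof. by move=> hf hg; apply: cvgD. Qed.

Lemma cCst (k t : R) : {for t, continuous (fun _ : R => k)}.
Proof. exact: cvg_cst. Qed.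

Lemma cId (t : R) : {for t, continuous (fun y : R => y)}.
Proof. exact: cvg_id. Qed.

Lemma cExp (f : R -> R) (t : R) : {for t, continuous f} ->
  {for t, continuous (fun y => expR (f y))}.
Proof. by move=> hf; apply: (continuous_comp hf); exact: continuous_expR. Qed.

Lemma cPow (a t : R) : 0 < t -> {for t, continuous (fun y => y `^ a)}.
Proof. by move=> t0; exact: is_derive_cont (dPow a t0). Qed.

Lemma cNeg (f : R -> R) (t : R) : {for t, continuous f} ->
  {for t, continuous (fun y => - f y)}.
Proof. by move=> hf; apply: cvgN. Qed.

Definition gam (a t : R) := t `^ (a - 1) * expR (- t).
Definition hh (a t : R) := a * t `^ (a - 1) * expR (- t `^ a) + expR (- 2^-1 * t) / 2.
Definition HH (a t : R) := - expR (- t `^ a) - expR (- 2^-1 * t).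

Lemma dHH (a t : R) : 0 < t -> is_derive t 1 (HH a) (hh a t).
Proof.
move=> t0.
have h1 := dExp (dScale (-1) (dPow a t0)).
have h2 := dExp (dScale (- 2^-1) (dId t)).
have := dAdd (dScale (-1) h1) (dScale (-1) h2).
apply: is_derive_ext => [y|]; rewrite /HH /hh !mulN1r //.
ring.
Qed.

Lemma cont_hh (a t : R) : 0 < t -> {for t, continuous (hh a)}.
Proof.
move=> t0; apply: cAdd.
  apply: cMul; first by apply: cMul; [exact: cCst | exact: cPow].
  by apply: cExp; apply: cNeg; exact: cPow.
apply: (@cMul _ (fun _ => 2^-1)); last exact: cCst.
by apply: cExp; apply: cMul; [exact: cCst | exact: cId].
Qed.

Lemma int_hh (a : R) : 0 < a -> mu.-integrable Dp (EFin \o hh a).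
Proof.
move=> a0; apply: (@toolP _ _ (HH a) (-2) 0).
- move=> t t0; rewrite /hh; apply: addr_ge0; last by rewrite divr_ge0 ?expR_ge0.
  by apply: mulr_ge0; [apply: mulr_ge0; [exact: ltW | exact: powR_ge0] | exact: expR_ge0].
- by move=> t; rewrite in_itv/= andbT => t0; exact: cont_hh a t t0.
- by move=> t t0; case: (dHH a t t0).
- by move=> t; rewrite in_itv/= andbT => t0; rewrite derive1E (derive_val (is_derive:=dHH a t t0)).
- move=> t t0; rewrite /HH.
  have e1 : expR (- t `^ a) <= 1 by rewrite expR_le1 oppr_le0 powR_ge0.
  have e2 : expR (- 2^-1 * t) <= 1.
    by rewrite expR_le1 mulNr oppr_le0 mulr_ge0// ltW.
  have := expR_ge0 (- t `^ a); have := expR_ge0 (- 2^-1 * t).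
  move=> *; apply/andP; split; lra.
Qed.

Lemma cont_gam (a t : R) : 0 < t -> {for t, continuous (gam a)}.
Proof.
move=> t0; apply: cMul; first exact: cPow.
by apply: cExp; apply: cNeg; exact: cId.
Qed.

Lemma meas_Dp (f : R -> R) : {in `]0, +oo[, continuous f} -> measurable_fun Dp f.
Proof.
move=> cf; apply: measurable_realfun.open_continuous_measurable_fun => //.
by move=> x /[1!inE] /= x0; exact: cf.
Qed.

Lemma gam_bound (a K t : R) : 0 < a -> 0 <= K ->
  (forall t, 1 <= t -> t `^ (a - 1) <= K * expR (t / 2)) -> 0 < t ->
  gam a t <= (expR 1 / a + 2 * K) * hh a t.
Proof.
move=> a0 K0 HK t0.
set p := t `^ (a - 1).
set eA := expR (- t `^ a).
set eB := expR (- 2^-1 * t).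
have p0 : 0 <= p by exact: powR_ge0.
have eA0 : 0 <= eA by exact: expR_ge0.
have eB0 : 0 <= eB by exact: expR_ge0.
have et1 : expR (- t) <= 1 by rewrite expR_le1 oppr_le0 ltW.
have et0 : 0 <= expR (- t) by exact: expR_ge0.
have e10 : 0 <= expR 1 / a by rewrite divr_ge0 ?expR_ge0 ?ltW.
have hA : 0 <= a * p * eA by rewrite mulr_ge0// mulr_ge0// ltW.
have hhA : a * p * eA <= hh a t by rewrite /hh lerDl divr_ge0// expR_ge0.
have hhB : eB / 2 <= hh a t by rewrite /hh lerDr.
have hh0 : 0 <= hh a t by apply: le_trans hhB; rewrite divr_ge0.
have X1 : 0 <= expR 1 / a * hh a t by rewrite mulr_ge0.
have X2 : 0 <= 2 * K * hh a t by rewrite mulr_ge0// mulr_ge0.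
rewrite mulrDl.
case: (leP t 1) => t1.
- have ta : t `^ a <= 1.
    have := @ge0_ler_powR R a (ltW a0) t 1; rewrite powR1 => ->//.
    + by rewrite nnegrE ltW.
    + by rewrite nnegrE.
  have e1A : 1 <= expR 1 * eA.
    by rewrite /eA -expRD; apply: le_trans (expR_ge1Dx _); lra.
  have g1 : gam a t <= p by rewrite /gam -/p; exact: ler_piMr.
  have g2 : p <= expR 1 / a * (a * p * eA).
    have -> : expR 1 / a * (a * p * eA) = p * (expR 1 * eA).
      by field; rewrite gt_eqF.
    nra.
  have g3 : expR 1 / a * (a * p * eA) <= expR 1 / a * hh a t.
    exact: ler_wpM2l.
  lra.
- have hp : p <= K * expR (t / 2) by apply: HK; exact: ltW.
  have g1 : gam a t <= K * eB.
    have -> : K * eB = K * expR (t / 2) * expR (- t).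
      by rewrite -mulrA -expRD /eB; congr (_ * expR _); field.
    by rewrite /gam -/p; apply: ler_wpM2r.
  have g2 : K * eB <= 2 * K * hh a t.
    have -> : K * eB = 2 * K * (eB / 2) by field.
    apply: ler_wpM2l => //; exact: mulr_ge0.
  lra.
Qed.

Lemma hh_ge0 (a t : R) : 0 < a -> 0 < t -> 0 <= hh a t.
Proof.
move=> a0 t0; rewrite /hh; apply: addr_ge0; last by rewrite divr_ge0 ?expR_ge0.
by apply: mulr_ge0; [apply: mulr_ge0; [exact: ltW | exact: powR_ge0] | exact: expR_ge0].
Qed.

Lemma gam_ge0 (a t : R) : 0 <= gam a t.
Proof. by rewrite /gam mulr_ge0 ?powR_ge0 ?expR_ge0. Qed.

Lemma gam_int (a : R) : 0 < a -> mu.-integrable Dp (EFin \o gam a).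
Proof.
move=> a0; have [K K0 HK] := powR_exp_bound (a - 1).
have hi : mu.-integrable Dp (fun x => (expR 1 / a + 2 * K)%:E * (EFin \o hh a) x)%E.
  by apply: integrableZl => //; exact: int_hh.
apply: le_integrable hi => //.
- apply/measurable_EFinP; apply: meas_Dp => t; rewrite in_itv/= andbT => t0.
  exact: cont_gam.
- move=> t /=; rewrite in_itv/= andbT => t0.
  have hb := gam_bound a K t a0 K0 HK t0.
  have hC : 0 <= (expR 1 / a + 2 * K) * hh a t.
    apply: mulr_ge0; last exact: hh_ge0.
    by apply: addr_ge0; [rewrite divr_ge0 ?expR_ge0 ?ltW | rewrite mulr_ge0].
  by rewrite lee_fin !ger0_norm ?gam_ge0.
Qed.

End S2.

Section S3.
Context {R : realType}.
Notation mu := (@lebesgue_measure R).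
Local Notation Dp := (`]0%R, +oo[%classic : set R).

Definition pE (E : R -> R) (a t : R) := t `^ (a - 1) * E t.

Lemma cont_pE (E : R -> R) (a t : R) : 0 < t -> {for t, continuous E} ->
  {for t, continuous (pE E a)}.
Proof. by move=> t0 cE; apply: cMul => //; exact: cPow. Qed.

Lemma pE_int (E : R -> R) (C a : R) : 0 < a ->
  (forall t, 0 < t -> {for t, continuous E}) ->
  (forall t, 0 < t -> 0 <= E t <= C * expR (- t)) ->
  mu.-integrable Dp (EFin \o pE E a).
Proof.
move=> a0 cE EC.
have hi : mu.-integrable Dp (fun x => C%:E * (EFin \o gam a) x)%E.
  by apply: integrableZl => //; exact: gam_int.
apply: le_integrable hi => //.
- apply/measurable_EFinP; apply: meas_Dp => t; rewrite in_itv/= andbT => t0.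
  by apply: cont_pE => //; exact: cE.
- move=> t /=; rewrite in_itv/= andbT => t0.
  have /andP[e0 e1] := EC t t0.
  have p0 : 0 <= t `^ (a - 1) := powR_ge0 _ _.
  rewrite lee_fin ger0_norm; last exact: mulr_ge0.
  apply: le_trans (ler_norm _); rewrite /pE /gam mulrCA.
  exact: ler_wpM2l.
Qed.

Lemma pE_limy (E : R -> R) (C a : R) :
  (forall t, 0 < t -> 0 <= E t <= C * expR (- t)) ->
  (t `^ a * E t) @[t --> +oo] --> 0.
Proof.
move=> EC; have [K K0 HK] := powR_exp_bound a.
apply: (@squeeze_cvgr _ _ _ _ (fun _ => 0) (fun t => C * K * expR (- (t / 2)))).
- near=> t.
  have t1 : 1 <= t by near: t; apply: nbhs_pinfty_ge; rewrite num_real.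
  have t0 : 0 < t by apply: lt_le_trans t1.
  have /andP[e0 e1] := EC t t0.
  have p0 : 0 <= t `^ a := powR_ge0 _ _.
  apply/andP; split; first exact: mulr_ge0.
  apply: le_trans (ler_wpM2l p0 e1) _.
  have ce0 : 0 <= C * expR (- t) by apply: le_trans e1.
  apply: le_trans (ler_wpM2r ce0 (HK t t1)) _.
  rewrite mulrCA !mulrA -mulrA -expRD.
  have -> : t / 2 + - t = - (t / 2) by field.
  by rewrite [C * K]mulrC.
- exact: cvg_cst.
- rewrite -(mulr0 (C * K)); apply: cvgM; first exact: cvg_cst.
  apply: (cvg_comp (fun t : R => t / 2) (fun x => expR (- x))); last exact: cvgr_expR.
  apply/cvgryPge => A; near=> t.
  rewrite ler_pdivlMr//; near: t; apply: nbhs_pinfty_ge; rewrite num_real.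
Unshelve. all: by end_near. Qed.

Lemma pE_lim0 (E : R -> R) (a : R) : 0 < a -> {for 0, continuous E} ->
  (t `^ a * E t) @[t --> 0^'+] --> 0.
Proof.
move=> a0 cE; rewrite -[X in _ --> X](mul0r (E 0)); apply: cvgM.
  exact: (powR_cvg0 a0).
exact: cvg_at_right_filter.
Qed.

Lemma intD (f g : R -> R) : mu.-integrable Dp (EFin \o f) ->
  mu.-integrable Dp (EFin \o g) -> mu.-integrable Dp (EFin \o (fun x => f x + g x)).
Proof.
move=> hf hg; have := integrableD (mu:=mu) (measurable_itv _) hf hg.
by apply: (eq_integrable (mu:=mu) (measurable_itv _)) => x _.
Qed.

Lemma intZ (k : R) (f : R -> R) : mu.-integrable Dp (EFin \o f) ->
  mu.-integrable Dp (EFin \o (fun x => k * f x)).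
Proof.
move=> hf; have := integrableZl (mu:=mu) (measurable_itv _) k hf.
by apply: (eq_integrable (mu:=mu) (measurable_itv _)) => x _.
Qed.

Lemma pE_recur (E dE : R -> R) (C a : R) : 0 < a ->
  (forall t : R, is_derive t 1 E (dE t)) ->
  (forall t, 0 < t -> {for t, continuous dE}) ->
  (forall t, 0 < t -> 0 <= E t <= C * expR (- t)) ->
  mu.-integrable Dp (EFin \o (fun t => t `^ a * dE t)) ->
  a * \int[mu]_(x in Dp) pE E a x + \int[mu]_(x in Dp) (x `^ a * dE x) = 0.
Proof.
move=> a0 hE cdE EC idE.
have cE t : {for t, continuous E} := is_derive_cont (hE t).
have i1 := pE_int E C a a0 (fun t _ => cE t) EC.
have i2 := intZ a (pE E a) i1.
rewrite -RintegralZl// -RintegralD//.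
set f := fun t => a * pE E a t + t `^ a * dE t.
have if1 : mu.-integrable Dp (EFin \o f) by exact: (intD _ _ i2 idE).
rewrite /Rintegral (@toolS _ f (fun t => t `^ a * E t) 0 0) ?subrr//.
- move=> t; rewrite in_itv/= andbT => t0; rewrite /f.
  apply: (cAdd (fun t1 => a * pE E a t1) (fun t1 => t1 `^ a * dE t1) t); first by apply: cMul; [exact: cCst | exact: cont_pE].
  by apply: cMul; [exact: cPow | exact: cdE].
- by move=> t t0; case: (dMul (dPow a t0) (hE t)).
- move=> t; rewrite in_itv/= andbT => t0.
  rewrite derive1E (derive_val (is_derive := dMul (dPow a t0) (hE t))).
  by rewrite /f /pE mulrA.
- exact: pE_lim0 (cE 0).
- exact: pE_limy EC.
Qed.

End S3.

Section S4.
Context {R : realType}.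
Notation mu := (@lebesgue_measure R).
Local Notation Dp := (`]0%R, +oo[%classic : set R).

Lemma powRS (t b : R) : 0 < t -> t `^ (b + 1) = t `^ b * t.
Proof.
move=> t0; rewrite powRD ?powRr1 ?ltW//.
by apply/implyP => _; rewrite gt_eqF.
Qed.

Lemma pE_S (E : R -> R) (a t : R) : 0 < t -> pE E (a + 1) t = t * pE E a t.
Proof.
move=> t0; rewrite /pE.
have -> : a + 1 - 1 = (a - 1) + 1 by ring.
by rewrite powRS//; ring.
Qed.

Lemma Rint_ext (f g : R -> R) : (forall t, 0 < t -> f t = g t) ->
  \int[mu]_(x in Dp) f x = \int[mu]_(x in Dp) g x.
Proof.
by move=> fg; apply: eq_Rintegral => t /[1!inE] /=; rewrite in_itv/= andbT => /fg.
Qed.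

Lemma int_ext (f g : R -> R) : (forall t, 0 < t -> f t = g t) ->
  mu.-integrable Dp (EFin \o f) -> mu.-integrable Dp (EFin \o g).
Proof.
move=> fg; apply: (eq_integrable (mu:=mu) (measurable_itv _)) => t /[1!inE] /=.
by rewrite in_itv/= andbT => /fg ->.
Qed.

Definition Eg (t : R) := expR (- t).

Lemma dEg (t : R) : is_derive t 1 Eg (- Eg t).
Proof.
have := dExp (dScale (-1) (dId t)).
apply: is_derive_ext => [y|]; rewrite /Eg ?mulN1r//.
by rewrite mulrN1.
Qed.

Lemma Eg_bd (t : R) : 0 < t -> 0 <= Eg t <= 1 * expR (- t).
Proof. by move=> _; rewrite mul1r lexx expR_ge0. Qed.

Lemma cEg (t : R) : {for t, continuous Eg}.
Proof. exact: is_derive_cont (dEg t). Qed.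

Lemma Eg_int (a : R) : 0 < a -> mu.-integrable Dp (EFin \o pE Eg a).
Proof. by move=> a0; apply: (pE_int Eg 1 a a0) => [t _|]; [exact: cEg | exact: Eg_bd]. Qed.

Lemma Eg_recur (a : R) : 0 < a ->
  \int[mu]_(x in Dp) pE Eg (a + 1) x = a * \int[mu]_(x in Dp) pE Eg a x.
Proof.
move=> a0.
have hint : mu.-integrable Dp (EFin \o (fun t => t `^ a * - Eg t)).
  have := intZ (-1) _ (Eg_int (a + 1) (addr_gt0 a0 ltr01)).
  by apply: int_ext => t t0; rewrite /pE addrK mulrN mulN1r.
have := pE_recur Eg (fun t => - Eg t) 1 a a0 dEg
  (fun t _ => cNeg _ _ (cEg t)) Eg_bd hint.
have -> : \int[mu]_(x in Dp) (x `^ a * - Eg x) = - \int[mu]_(x in Dp) pE Eg (a + 1) x.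
  rewrite (@Rint_ext _ (fun x => -1 * pE Eg (a + 1) x)); last first.
    by move=> t t0; rewrite /pE addrK mulrN mulN1r.
  by rewrite RintegralZl ?mulN1r//; exact: Eg_int (addr_gt0 a0 ltr01).
lra.
Qed.

Lemma pE_pos (E : R -> R) (C a : R) : 0 < a -> (forall t, {for t, continuous E}) ->
  (forall t, 0 < t -> 0 <= E t <= C * expR (- t)) -> (forall t, 0 < E t) ->
  0 < \int[mu]_(x in Dp) pE E a x.
Proof.
move=> a0 cE EC Ep.
apply: (Rint_pos _ 1) => //.
- by apply: (pE_int E C a a0) => // t _.
- by move=> t t0; rewrite /pE mulr_ge0 ?powR_ge0// ltW.
- by apply: cont_pE.
- by rewrite /pE mulr_gt0 ?powR_gt0.
Qed.

Definition Eh (x t : R) := expR (- t ^+ 2 - 2 * x * t).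
Definition Kh (x : R) := (1 - 2 * x) ^+ 2 / 4.

Lemma dEh (x t : R) : is_derive t 1 (Eh x) (Eh x t * (- (2 * t) - 2 * x)).
Proof.
have := dExp (dAdd (dScale (-1) (dMul (dId t) (dId t))) (dScale (- (2 * x)) (dId t))).
apply: is_derive_ext => [y|]; rewrite /Eh.
  by congr expR; ring.
by congr (expR _ * _); ring.
Qed.

Lemma cEh (x t : R) : {for t, continuous (Eh x)}.
Proof. exact: is_derive_cont (dEh x t). Qed.

Lemma Eh_bd (x t : R) : 0 < t -> 0 <= Eh x t <= expR (Kh x) * expR (- t).
Proof.
move=> _; rewrite /Eh expR_ge0/= -expRD ler_expR -subr_ge0.
have -> : Kh x + - t - (- t ^+ 2 - 2 * x * t) = (t + (2 * x - 1) / 2) ^+ 2.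
  by rewrite /Kh; field.
exact: sqr_ge0.
Qed.

Lemma Eh_int (x a : R) : 0 < a -> mu.-integrable Dp (EFin \o pE (Eh x) a).
Proof.
by move=> a0; apply: (pE_int (Eh x) (expR (Kh x)) a a0) => [t _|]; [exact: cEh | exact: Eh_bd].
Qed.

Lemma Eh_pos (x a : R) : 0 < a -> 0 < \int[mu]_(y in Dp) pE (Eh x) a y.
Proof.
move=> a0; apply: (pE_pos (Eh x) (expR (Kh x)) a a0).
- exact: cEh.
- exact: Eh_bd.
- by move=> t; exact: expR_gt0.
Qed.

Lemma Eh_recur (x a : R) : 0 < a ->
  a * \int[mu]_(y in Dp) pE (Eh x) a y =
  2 * \int[mu]_(y in Dp) pE (Eh x) (a + 1 + 1) y +
  2 * x * \int[mu]_(y in Dp) pE (Eh x) (a + 1) y.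
Proof.
move=> a0.
have a1 : 0 < a + 1 by rewrite addr_gt0.
have a2 : 0 < a + 1 + 1 by rewrite addr_gt0.
have pw t : 0 < t -> t `^ a * (Eh x t * (- (2 * t) - 2 * x)) =
    -2 * pE (Eh x) (a + 1 + 1) t + - (2 * x) * pE (Eh x) (a + 1) t.
  move=> t0; rewrite pE_S// /pE addrK; ring.
have hint : mu.-integrable Dp
    (EFin \o (fun t => t `^ a * (Eh x t * (- (2 * t) - 2 * x)))).
  have := intD _ _ (intZ (-2) _ (Eh_int x _ a2)) (intZ (- (2 * x)) _ (Eh_int x _ a1)).
  by apply: int_ext => t t0; rewrite pw.
have cdE t : 0 < t -> {for t, continuous (fun t => Eh x t * (- (2 * t) - 2 * x))}.
  move=> _; apply: cMul; first exact: cEh.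
  apply: cAdd; last exact: cCst.
  by apply: cNeg; apply: cMul; [exact: cCst | exact: cId].
have := pE_recur (Eh x) _ (expR (Kh x)) a a0 (dEh x) cdE (Eh_bd x) hint.
rewrite (Rint_ext _ _ pw) RintegralD//; last 2 first.
- exact: intZ (Eh_int x _ a2).
- exact: intZ (Eh_int x _ a1).
rewrite !RintegralZl//; last 2 first.
- exact: Eh_int.
- exact: Eh_int.
lra.
Qed.

End S4.

Section S5.
Context {R : realType}.
Notation mu := (@lebesgue_measure R).
Local Notation Dp := (`]0%R, +oo[%classic : set R).

Lemma Eh_CS (x a : R) : 0 < a ->
  (\int[mu]_(y in Dp) pE (Eh x) (a + 1) y) ^+ 2 <
  \int[mu]_(y in Dp) pE (Eh x) a y * \int[mu]_(y in Dp) pE (Eh x) (a + 1 + 1) y.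
Proof.
move=> a0.
have a1 : 0 < a + 1 by rewrite addr_gt0.
have a2 : 0 < a + 1 + 1 by rewrite addr_gt0.
set I0 := \int[mu]_(y in Dp) pE (Eh x) a y.
set I1 := \int[mu]_(y in Dp) pE (Eh x) (a + 1) y.
set I2 := \int[mu]_(y in Dp) pE (Eh x) (a + 1 + 1) y.
have I0p : 0 < I0 by exact: Eh_pos.
have I1p : 0 < I1 by exact: Eh_pos.
set l := I1 / I0.
have l0 : 0 < l by exact: divr_gt0.
pose q t := pE (Eh x) a t * (t - l) ^+ 2.
have pw t : 0 < t -> q t =
    pE (Eh x) (a + 1 + 1) t + - (2 * l) * pE (Eh x) (a + 1) t + l ^+ 2 * pE (Eh x) a t.
  by move=> t0; rewrite /q !pE_S//; ring.
have i2 := Eh_int x _ a2.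
have i1 := intZ (- (2 * l)) _ (Eh_int x _ a1).
have i0 := intZ (l ^+ 2) _ (Eh_int x _ a0).
have iq : mu.-integrable Dp (EFin \o q).
  have := intD _ _ (intD _ _ i2 i1) i0.
  by apply: int_ext => t t0; rewrite pw.
have Qp : 0 < \int[mu]_(y in Dp) q y.
  apply: (Rint_pos q (l + 1) iq).
  - move=> t t0; apply: mulr_ge0; last exact: sqr_ge0.
    by rewrite /pE mulr_ge0 ?powR_ge0 ?expR_ge0.
  - by rewrite addr_gt0.
  - apply: cMul; first by apply: cont_pE; [rewrite addr_gt0 | exact: cEh].
    have -> : (fun t => (t - l) ^+ 2) = (fun t => (t - l) * (t - l)).
      by apply/funext => t; rewrite expr2.
    by apply: cMul; apply: cAdd; [exact: cId | exact: cCst | exact: cId | exact: cCst].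
  - rewrite /q addrAC subrr add0r expr1n mulr1 /pE mulr_gt0 ?powR_gt0 ?expR_gt0//.
    by rewrite addr_gt0.
move: Qp; rewrite (Rint_ext _ _ pw) RintegralD//; try exact: (intD _ _ i2 i1).
rewrite RintegralD// !RintegralZl//; try exact: Eh_int.
rewrite -/I0 -/I1 -/I2 => Qp.
have E : I0 * (I2 + - (2 * l) * I1 + l ^+ 2 * I0) = I0 * I2 - I1 ^+ 2.
  by rewrite /l; field; rewrite gt_eqF.
have : 0 < I0 * (I2 + - (2 * l) * I1 + l ^+ 2 * I0) by exact: mulr_gt0.
rewrite E; lra.
Qed.

Lemma alg_main (s x G0 J0 J1 J2 J3 : R) : 0 < s -> 0 < G0 -> 0 < J0 -> 0 < J1 ->
  0 < J2 -> 0 < J3 ->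
  s * J0 = 2 * J2 + 2 * x * J1 -> (s + 1) * J1 = 2 * J3 + 2 * x * J2 ->
  J1 ^+ 2 < J0 * J2 -> J2 ^+ 2 < J1 * J3 ->
  (1 < (J1 / (s * G0)) ^+ 2 / ((J0 / G0) * (J2 / ((s + 1) * (s * G0)))) /\
   (J1 / (s * G0)) ^+ 2 / ((J0 / G0) * (J2 / ((s + 1) * (s * G0)))) < (- (s + 1)) / (- s)) /\
  0 < (J1 / (s * G0)) ^+ 2 - (J0 / G0) * (J2 / ((s + 1) * (s * G0))).
Proof.
move=> s0 G00 J00 J10 J20 J30 R1 R2 C1 C2.
have s1 : 0 < s + 1 by rewrite addr_gt0.
have key : 0 < (s + 1) * J1 ^+ 2 - s * J0 * J2.
  have R1' : s * J0 * J2 = (2 * J2 + 2 * x * J1) * J2 by rewrite R1.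
  have R2' : (s + 1) * J1 * J1 = (2 * J3 + 2 * x * J2) * J1 by rewrite R2.
  have -> : (s + 1) * J1 ^+ 2 - s * J0 * J2 = 2 * (J1 * J3 - J2 ^+ 2).
    rewrite R1' expr2 mulrA R2'; ring.
  by rewrite mulr_gt0// subr_gt0.
have Req : (J1 / (s * G0)) ^+ 2 / ((J0 / G0) * (J2 / ((s + 1) * (s * G0)))) =
    (s + 1) * J1 ^+ 2 / (s * J0 * J2).
  by field; rewrite !gt_eqF.
split; last first.
  have -> : (J1 / (s * G0)) ^+ 2 - (J0 / G0) * (J2 / ((s + 1) * (s * G0))) =
    ((s + 1) * J1 ^+ 2 - s * J0 * J2) / ((s + 1) * s ^+ 2 * G0 ^+ 2).
    by field; rewrite !gt_eqF.
  by rewrite divr_gt0// !mulr_gt0// exprn_gt0.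
rewrite Req; split.
  by rewrite ltr_pdivlMr ?mul1r ?mulr_gt0// -subr_gt0.
have -> : (- (s + 1)) / (- s) = (s + 1) / s by field; rewrite gt_eqF.
rewrite -subr_gt0.
have -> : (s + 1) / s - (s + 1) * J1 ^+ 2 / (s * J0 * J2) =
    (s + 1) * (J0 * J2 - J1 ^+ 2) / (s * J0 * J2).
  by field; rewrite !gt_eqF.
by rewrite divr_gt0 ?mulr_gt0// subr_gt0.
Qed.

End S5.

Local Close Scope classical_set_scope.

Theorem corollary3p2 (R : realType) (nu : R) (hnu : nu < 0) :
  (forall x : R, 1 < Rratio nu x /\ Rratio nu x < (nu - 1) / nu) /\
  (forall x : R, Hermite (nu - 1) x ^+ 2 - Hermite nu x * Hermite (nu - 2) x > 0).
Proof.
have s0 : 0 < - nu by rewrite oppr_gt0.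
move: s0; set s := - nu => s0.
have enu : nu = - s by rewrite /s opprK.
have e1 : nu - 1 = - (s + 1) by rewrite /s; ring.
have e2 : nu - 2 = - (s + 1 + 1) by rewrite /s; ring.
have s1 : 0 < s + 1 by rewrite addr_gt0.
have s2 : 0 < s + 1 + 1 by rewrite addr_gt0.
have HG a : 0 < a -> Gamma a =
    \int[lebesgue_measure]_(t in `]0%R, +oo[%classic) pE Eg a t.
  move=> a0; rewrite /Gamma -Rintegral_itv_obnd_cbnd; first by apply: eq_Rintegral.
  exact: (Eg_int a a0).
have Hx x a : 0 < a -> Hermite (- a) x =
    \int[lebesgue_measure]_(t in `]0%R, +oo[%classic) pE (Eh x) a t / Gamma a.
  move=> a0; rewrite /Hermite opprK -Rintegral_itv_obnd_cbnd.
    by rewrite mulrC; congr (_ * _); apply: eq_Rintegral.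
  exact: (Eh_int x a a0).
have G0p : 0 < Gamma s.
  rewrite HG//; apply: (pE_pos Eg 1 s s0) => //.
  - exact: cEg.
  - exact: Eg_bd.
  - by move=> t; exact: expR_gt0.
have G1 : Gamma (s + 1) = s * Gamma s by rewrite !HG// Eg_recur.
have G2 : Gamma (s + 1 + 1) = (s + 1) * (s * Gamma s) by rewrite HG// Eg_recur// -HG// G1.
have main x := alg_main s x (Gamma s) _ _ _ _ s0 G0p (Eh_pos x s s0) (Eh_pos x _ s1)
  (Eh_pos x _ s2) (Eh_pos x (s + 1 + 1 + 1) (addr_gt0 s2 ltr01))
  (Eh_recur x s s0) (Eh_recur x _ s1) (Eh_CS x s s0) (Eh_CS x _ s1).
split => x; have [[h1 h2] h3] := main x.
  by rewrite /Rratio e1 e2 enu !Hx// G2 G1.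
by rewrite e1 e2 enu !Hx// G2 G1.
Qed.
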